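(* Let $p$ be a set partition with $N(p)\ge 3$ distinct letters and length $|p|\le 2N(p)$. If $\phi_{aba}^{N(p)-1}(p)$ is not sorted, then $p$ is equivalent to the set partition $(a_1a_2\cdots a_{N(p)})^2 = a_1a_2\cdots a_{N(p)}a_1a_2\cdots a_{N(p)}$, where $a_1,\dots,a_{N(p)}$ are distinct letters.
   Context: A set partition is a finite word $p=p_1p_2\cdots p_n$ over an alphabet $A$ (letters may repeat). Its length is $|p|=n$ and $N(p)$ denotes the number of distinct letters occurring in $p$. A set partition is sorted if, for every letter, all occurrences of that letter appear consecutively. Two set partitions $p=p_1\cdots p_n$ and $q=q_1\cdots q_n$ are equivalent if there is a bijection $f:A\to A$ with $q=f(p_1)f(p_2)\cdots f(p_n)$. A word contains the pattern $aba$ if it has a (not necessarily contiguous) subsequence $xyz$ with $x=z\neq y$; otherwise it avoids $aba$. The map $\phi_{aba}$ (Xia's deterministic stack-sorting map for set partitions) is defined as follows. Start with the input $p$, an empty stack, and an empty output. Repeat: if the input is nonempty and pushing its leftmost letter onto the top of the stack would leave the stack contents (read from top to bottom) avoiding the pattern $aba$, then remove that letter from the input and push it onto the stack; otherwise pop the top letter of the stack and append it to the right end of the output. Stop when both input and stack are empty; $\phi_{aba}(p)$ is the output word. For example, $\phi_{aba}(abcac)=cbcaa$. $\phi_{aba}^k$ denotes the $k$-fold iterate. *)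

(* Defs.v *)
From mathcomp Require Import all_boot.
Set Implicit Arguments. Unset Strict Implicit. Unset Printing Implicit Defensive.

(* A set partition is a word p : seq A over an alphabet A (an eqType). *)

Definition Nletters (A : eqType) (p : seq A) : nat := size (undup p).

Definition contains_aba (A : eqType) (w : seq A) : bool :=
  has (fun xy : A * A => (xy.1 != xy.2) && subseq [:: xy.1; xy.2; xy.1] w)
      [seq (x, y) | x <- w, y <- w].

Definition avoids_aba (A : eqType) (w : seq A) : bool := ~~ contains_aba w.

Definition sorted_sp (A : eqType) (p : seq A) : Prop :=
  forall (x : A) (i j k : nat), i < j -> j < k -> k < size p ->
    nth x p i = x -> nth x p k = x -> nth x p j = x.

Definition sp_equiv (A : eqType) (p q : seq A) : Prop :=
  exists f : A -> A, bijective f /\ q = map f p.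

(* One step of the stack-sorting machine.  State = (input, stack, output);
   the stack is a list whose head is the top. *)
Definition phi_step (A : eqType) (st : seq A * seq A * seq A)
  : seq A * seq A * seq A :=
  let: (inp, stk, out) := st in
  match inp with
  | x :: inp' =>
      if avoids_aba (x :: stk) then (inp', x :: stk, out)
      else match stk with
           | y :: stk' => (inp, stk', rcons out y)
           | [::] => st
           end
  | [::] =>
      match stk with
      | y :: stk' => (inp, stk', rcons out y)
      | [::] => st
      end
  end.

(* Every letter is pushed once and popped once, so exactly 2|p| steps
   empty both input and stack; further steps are the identity. *)
Definition phi_aba (A : eqType) (p : seq A) : seq A :=
  (iter (2 * size p) (@phi_step A) (p, [::], [::])).2.

(* Main.v *)
Require Import Defs.
From mathcomp Require Import all_boot.
From mathcomp Require Import zify.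
Set Implicit Arguments. Unset Strict Implicit. Unset Printing Implicit Defensive.


Section Contig.
Variable A : eqType.
Implicit Types (x y a : A) (u v w : seq A).

Definition contigb x w : bool :=
  take (count_mem x w) (drop (index x w) w) == nseq (count_mem x w) x.

Lemma notin_take_index x w : x \notin take (index x w) w.
Proof. by rewrite in_take_leq ?index_size // ltnn. Qed.

Lemma contigP x w :
  reflect (exists u n v, w = u ++ nseq n x ++ v /\ x \notin u /\ x \notin v)
          (contigb x w).
Proof.
apply: (iffP idP).
  rewrite /contigb => /eqP H.
  set i := index x w in H *; set c := count_mem x w in H *.
  exists (take i w), c, (drop c (drop i w)).
  have E : w = take i w ++ nseq c x ++ drop c (drop i w).
    by rewrite -H cat_take_drop cat_take_drop.
  split => //; split; first exact: notin_take_index.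
  apply/count_memPn.
  have := congr1 (count_mem x) E.
  rewrite !count_cat (count_memPn (notin_take_index x w)) count_nseq /= eqxx mul1n.
  by rewrite -/c add0n => /eqP; rewrite -{1}[c]addn0 eqn_add2l => /eqP <-.
case=> u [n [v [-> [xu xv]]]].
case: n => [|n].
  rewrite /contigb /= !count_cat (count_memPn xu) (count_memPn xv) /=.
  by rewrite /contigb /= take0.
rewrite /contigb !count_cat (count_memPn xu) (count_memPn xv) count_nseq /= ?eqxx ?mul1n ?add0n ?addn0.
rewrite index_cat (negbTE xu) /= eqxx ?addn0.
by rewrite drop_size_cat // (_ : x :: nseq n x ++ v = nseq n.+1 x ++ v) // take_size_cat ?size_nseq.
Qed.

Lemma contig_notin x w : x \notin w -> contigb x w.
Proof. by move=> H; apply/contigP; exists w, 0, [::]; rewrite /= cats0. Qed.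

Lemma contig_catl x u v : x \notin u -> contigb x (u ++ v) = contigb x v.
Proof.
move=> xu; rewrite /contigb count_cat (count_memPn xu) add0n index_cat (negbTE xu).
by rewrite drop_cat ltnNge leq_addr /= addKn.
Qed.

Lemma contig_rev x w : contigb x (rev w) = contigb x w.
Proof.
suff H : forall w, contigb x w -> contigb x (rev w).
  by apply/idP/idP => /H //; rewrite revK.
move=> {}w /contigP [u [n [v [-> [xu xv]]]]]; apply/contigP.
exists (rev v), n, (rev u); rewrite !rev_cat rev_nseq catA; split => //.

by rewrite !mem_rev.
Qed.

Lemma contig_catr x u v : x \notin v -> contigb x (u ++ v) = contigb x u.
Proof.
by move=> xv; rewrite -contig_rev rev_cat contig_catl ?mem_rev // contig_rev.
Qed.

Lemma contig_nseq x n y : contigb x (nseq n y).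
Proof.
case: (eqVneq x y) => [->|xy]; last first.
  by apply: contig_notin; rewrite mem_nseq negb_and xy orbT.
by apply/contigP; exists [::], n, [::]; rewrite cats0.
Qed.

Lemma subseq_notin x s u w : x \notin u -> subseq (x :: s) (u ++ w) = subseq (x :: s) w.
Proof.
elim: u => [//|z u IH] /=; rewrite in_cons negb_or => /andP [xz xu].
by rewrite (negbTE xz) IH.
Qed.

Lemma contig_aba x y w : contigb x w -> subseq [:: x; y; x] w -> y = x.
Proof.
move=> /contigP [u [n [v [-> [xu xv]]]]].
rewrite subseq_notin // -subseq_rev rev_cat /= subseq_notin ?mem_rev //.
rewrite rev_nseq => /mem_subseq /(_ y); rewrite !inE eqxx orbT => /(_ isT).
by rewrite mem_nseq => /andP [_ /eqP].
Qed.

Lemma contig_split x y u v : contigb x (u ++ y :: v) -> x != y -> x \in u -> x \notin v.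
Proof.
move=> H xy xu; apply/negP => xv.
have S : subseq [:: x; y; x] (u ++ y :: v).
  by rewrite -[[:: x; y; x]]/([:: x] ++ [:: y; x]) cat_subseq ?sub1seq //= eqxx sub1seq.
by move: (contig_aba H S) => E; rewrite E eqxx in xy.
Qed.

End Contig.


Section Machine.
Variable A : eqType.
Implicit Types (x y a : A) (u v w inp stk s t T B rest r : seq A).

Fixpoint run (n : nat) (inp stk : seq A) : seq A :=
  match n with
  | 0 => [::]
  | n'.+1 =>
    match inp with
    | x :: inp' => if avoids_aba (x :: stk) then run n' inp' (x :: stk)
                   else match stk with y :: stk' => y :: run n' inp stk' | [::] => [::] end
    | [::] => match stk with y :: stk' => y :: run n' [::] stk' | [::] => [::] end
    end
  end.

Lemma avoids1 x : avoids_aba [:: x].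
Proof. by rewrite /avoids_aba /contains_aba /= eqxx. Qed.

Lemma run_nil n : run n [::] [::] = [::].
Proof. by case: n. Qed.

Lemma iter_run n inp stk out :
  (iter n (@phi_step A) (inp, stk, out)).2 = out ++ run n inp stk.
Proof.
elim: n inp stk out => [|n IH] inp stk out; first by rewrite /= cats0.
rewrite iterSr; case: inp => [|x inp'].
  case: stk => [|y stk'].
    by rewrite [phi_step _]/= IH run_nil.
  by rewrite [phi_step _]/= IH /= cat_rcons.
rewrite [phi_step _]/=; case: ifP => Hav.
  by rewrite IH /= Hav.
case: stk Hav => [|y stk'] Hav; first by rewrite avoids1 in Hav.
by rewrite IH /= Hav cat_rcons.
Qed.

Definition mu inp stk := 2 * size inp + size stk.
Definition Out inp stk := run (mu inp stk) inp stk.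
Definition phi w := Out w [::].

Lemma phi_abaE w : phi_aba w = phi w.
Proof. by rewrite /phi_aba iter_run /phi /Out /mu addn0. Qed.

Lemma Out_nil : Out [::] [::] = [::].
Proof. by rewrite /Out run_nil. Qed.

Lemma Out_nil_cons y s : Out [::] (y :: s) = y :: Out [::] s.
Proof. by rewrite /Out (_ : mu [::] (y :: s) = (mu [::] s).+1) // /mu /=; lia. Qed.

Lemma Out_push x inp s : avoids_aba (x :: s) -> Out (x :: inp) s = Out inp (x :: s).
Proof.
move=> H; rewrite /Out (_ : mu (x :: inp) s = (mu inp (x :: s)).+1) /=; last by rewrite /mu /=; lia.
by rewrite H.
Qed.

Lemma Out_pop x y inp s : ~~ avoids_aba (x :: y :: s) ->
  Out (x :: inp) (y :: s) = y :: Out (x :: inp) s.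
Proof.
move=> H; rewrite /Out (_ : mu (x :: inp) (y :: s) = (mu (x :: inp) s).+1) /=; last by rewrite /mu /=; lia.
by rewrite (negbTE H).
Qed.

Lemma run_ge n inp stk : mu inp stk <= n -> run n inp stk = Out inp stk.
Proof.
elim: n inp stk => [|n IH] inp stk.
  by rewrite leqn0 => /eqP E; rewrite /Out E.
case: inp => [|x inp'].
  case: stk => [|y s] H; first by rewrite run_nil Out_nil.
  by rewrite Out_nil_cons /= IH //; move: H; rewrite /mu /=; lia.
case: (boolP (avoids_aba (x :: stk))) => Hav H.
  by rewrite Out_push //= Hav IH //; move: H; rewrite /mu /=; lia.
case: stk Hav H => [|y s] Hav H; first by rewrite avoids1 in Hav.
by rewrite Out_pop //= (negbTE Hav) IH //; move: H; rewrite /mu /=; lia.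
Qed.

Lemma Out_nilS s : Out [::] s = s.
Proof. by elim: s => [|y s IH]; rewrite ?Out_nil ?Out_nil_cons ?IH. Qed.


Lemma containsP w :
  reflect (exists x y, x != y /\ subseq [:: x; y; x] w) (contains_aba w).
Proof.
apply: (iffP hasP).
  case=> [[x y]] _ /= /andP [xy S]; by exists x, y.
case=> x [y [xy S]]; exists (x, y) => /=; last by rewrite xy.
apply/allpairsP; exists (x, y) => /=; split => //.
  by apply: (mem_subseq S); rewrite inE eqxx.
by apply: (mem_subseq S); rewrite !inE eqxx orbT.
Qed.

Lemma avoids_sub u w : subseq u w -> avoids_aba w -> avoids_aba u.
Proof.
move=> S; apply: contra => /containsP [x [y [xy S']]]; apply/containsP.
by exists x, y; split => //; apply: subseq_trans S.
Qed.

Lemma avoids_tail x s : avoids_aba (x :: s) -> avoids_aba s.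
Proof. by apply: avoids_sub; apply: subseq_cons. Qed.

Lemma avoids_prefix s t : avoids_aba (s ++ t) -> avoids_aba s.
Proof. by apply: avoids_sub; apply: prefix_subseq. Qed.

Lemma avoids_cons x s : avoids_aba s ->
  avoids_aba (x :: s) = (x \notin s) || (ohead s == Some x).
Proof.
move=> Hs; apply/idP/idP.
  apply: contraLR; rewrite negb_or negbK; case: s Hs => [//|y s] Hs /andP [xin hy].
  have xy : x != y by apply: contraNneq hy => ->.
  move: xin; rewrite inE (negbTE xy) /= => xs.
  apply/negPn/containsP; exists x, y; split => //=.
  by rewrite /= eqxx eqxx /= sub1seq.
move=> H; apply/negP => /containsP [a [b [ab S]]].
move: S => /=; case: (eqVneq a x) => [eax|nax] S; last first.
  by move/negP: Hs; apply; apply/containsP; exists a, b.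
subst a.
have xs : x \in s by apply: (mem_subseq S); rewrite !inE eqxx orbT.
move: H; rewrite xs /=; case: s Hs S xs => [//|y s] Hs S _ /eqP [eyx]; subst y.
move: S => /=; rewrite eq_sym (negbTE ab) => S.
move/negP: Hs; apply; apply/containsP; exists x, b; split => //=.
by rewrite eqxx /= S.
Qed.

Lemma avoids_nseq n a : avoids_aba (nseq n a).
Proof.
apply/negP => /containsP [x [y [xy S]]].
have := mem_subseq S; move=> M.
have /M : x \in [:: x; y; x] by rewrite inE eqxx.
have /M : y \in [:: x; y; x] by rewrite !inE eqxx orbT.
rewrite !mem_nseq => /andP [_ /eqP E1] /andP [_ /eqP E2].
by rewrite E1 E2 eqxx in xy.
Qed.

Lemma Out_seg n v T B rest : mu v T <= n ->
  (forall z, z \in v ++ T -> z \notin B) -> avoids_aba (T ++ B) ->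
  (if rest is x :: _ then x \in B else true) ->
  Out (v ++ rest) (T ++ B) = Out v T ++ Out rest B.
Proof.
elim: n v T rest => [|n IH] v T rest.
  rewrite leqn0 /mu => /eqP; case: v => [|//]; case: T => [|//] _ _ _ _.
  by rewrite Out_nil.
case: v => [|x v].
  case: T => [|y T] Hmu Hd Hav Hr; first by rewrite Out_nil.
  have yB : y \notin B by apply: Hd; rewrite inE eqxx.
  have H1 : mu [::] T <= n by move: Hmu; rewrite /mu /=; lia.
  have H2 : forall z, z \in [::] ++ T -> z \notin B.
    by move=> z zT; apply: Hd; rewrite /= inE zT orbT.
  have H3 := avoids_tail Hav.
  case: rest Hr => [|x r] Hr.
    rewrite cats0 cat_cons !Out_nil_cons.
    by have /= -> := IH [::] T [::] H1 H2 H3 isT.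
  rewrite cat0s cat_cons Out_pop; last first.
    rewrite avoids_cons // negb_or negbK !inE mem_cat Hr !orbT /=.
    by apply/eqP => -[E]; rewrite E Hr in yB.
  by rewrite Out_nil_cons; have /= -> := IH [::] T (x :: r) H1 H2 H3 Hr.
move=> Hmu Hd Hav Hr.
have xB : x \notin B by apply: Hd; rewrite inE eqxx.
have HT : avoids_aba T by apply: avoids_prefix Hav.
have Heq : avoids_aba (x :: T ++ B) = avoids_aba (x :: T).
  rewrite !avoids_cons // mem_cat (negbTE xB) orbF.
  by case: T {Hmu Hd Hav HT} => [|t T] //=; rewrite ?orbT.
case: (boolP (avoids_aba (x :: T))) => Hx.
  rewrite cat_cons Out_push; last by rewrite Heq.
  rewrite -cat_cons (IH v (x :: T) rest) ?Out_push //.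
  - by move: Hmu; rewrite /mu /=; lia.
  - move=> z; rewrite mem_cat inE => /or3P [zv|/eqP ->|zT] //; apply: Hd; by rewrite mem_cat inE ?zv ?zT ?orbT.
  - by rewrite Heq.
case: T Hmu Hd Hav HT Heq Hx => [|y T] Hmu Hd Hav HT Heq Hx; first by rewrite avoids1 in Hx.
rewrite !cat_cons Out_pop; last by move: Hx; rewrite -Heq.
have H1 : mu (x :: v) T <= n by move: Hmu; rewrite /mu /=; lia.
have H2 : forall z, z \in (x :: v) ++ T -> z \notin B.
  move=> z; rewrite mem_cat => /orP [zv|zT]; apply: Hd; first by rewrite mem_cat zv.
  by rewrite mem_cat !inE zT !orbT.
have H3 := avoids_tail Hav.
by rewrite -cat_cons (IH (x :: v) T rest H1 H2 H3 Hr) (Out_pop v Hx).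
Qed.

Lemma phi_cons a r : phi (a :: r) = Out r [:: a].
Proof. by rewrite /phi Out_push // avoids1. Qed.

Lemma Out_aseg a j v rest : 0 < j -> a \notin v ->
  (if rest is x :: _ then x == a else true) ->
  Out (v ++ rest) (nseq j a) = phi v ++ Out rest (nseq j a).
Proof.
move=> j0 av Hr; rewrite -[nseq j a]cat0s (Out_seg (leqnn _)) //.
- by move=> z; rewrite cats0 mem_nseq negb_and => zv; apply/orP; right; apply: contraNneq av => <-.
- exact: avoids_nseq.
- by case: rest Hr => [|x r] //= /eqP ->; rewrite mem_nseq eqxx andbT.
Qed.

Lemma Out_acons a j r : Out (a :: r) (nseq j a) = Out r (nseq j.+1 a).
Proof. by rewrite Out_push // -[a :: nseq j a]/(nseq j.+1 a) avoids_nseq. Qed.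

Lemma perm_Out n inp stk : mu inp stk <= n -> perm_eq (Out inp stk) (inp ++ stk).
Proof.
elim: n inp stk => [|n IH] inp stk.
  by rewrite leqn0 /mu; case: inp => [|//]; case: stk => [|//] _; rewrite Out_nil.
case: inp => [|x inp'].
  case: stk => [|y s] H; first by rewrite Out_nil.
  by rewrite Out_nil_cons perm_cons IH //; move: H; rewrite /mu /=; lia.
case: (boolP (avoids_aba (x :: stk))) => Hav H.
  rewrite Out_push //; apply: perm_trans (IH _ _ _) _; first by move: H; rewrite /mu /=; lia.
  by rewrite -cat1s perm_catCA.
case: stk Hav H => [|y s] Hav H; first by rewrite avoids1 in Hav.
rewrite Out_pop //; apply: (@perm_trans _ (y :: ((x :: inp') ++ s))).
  by rewrite perm_cons IH //; move: H; rewrite /mu /=; lia.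
by rewrite (perm_catCA [:: y] (x :: inp' ) s).
Qed.

Lemma perm_phi w : perm_eq (phi w) w.
Proof. by have := perm_Out (leqnn (mu w [::])); rewrite cats0. Qed.

End Machine.


Section Props.
Variable A : eqType.
Implicit Types (x y a b c : A) (u v w r s t : seq A).

Lemma splitA a r : a \in r -> exists v r', r = v ++ a :: r' /\ a \notin v.
Proof.
move=> ar; exists (take (index a r) r), (drop (index a r).+1 r); split.
  by rewrite -{1}(cat_take_drop (index a r) r) (drop_nth a) ?index_mem // nth_index.
exact: notin_take_index.
Qed.

Lemma phi_nil : phi [::] = [::] :> seq A.
Proof. exact: Out_nil. Qed.

Lemma phi_consE b r : phi (b :: r) = Out r (nseq 1 b).
Proof. exact: phi_cons. Qed.

Lemma Out_nota a j r : 0 < j -> a \notin r -> Out r (nseq j a) = phi r ++ nseq j a.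
Proof.
by move=> j0 ar; rewrite -[r]cats0 Out_aseg // cats0 Out_nilS.
Qed.

Lemma Out_split a j v r' : 0 < j -> a \notin v ->
  Out (v ++ a :: r') (nseq j a) = phi v ++ Out r' (nseq j.+1 a).
Proof. by move=> j0 av; rewrite Out_aseg //= ?eqxx // Out_acons. Qed.

Lemma nseq_cat_cons j a r : nseq j a ++ a :: r = nseq j.+1 a ++ r.
Proof. by elim: j => //= j ->. Qed.

Lemma notin_phi x w : (x \in phi w) = (x \in w).
Proof. by rewrite (perm_mem (perm_phi w)). Qed.

Lemma notin_Out x r j a : (x \in Out r (nseq j a)) = (x \in r) || (x == a) && (0 < j).
Proof.
rewrite (perm_mem (perm_Out (leqnn _))) mem_cat mem_nseq; congr (_ || _).
by rewrite andbC.
Qed.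

Lemma Out_tail n r a j : size r <= n -> 0 < j ->
  exists X, Out r (nseq j a) = X ++ nseq (j + count_mem a r) a /\ a \notin X.
Proof.
elim: n r j => [|n IH] r j.
  rewrite leqn0 size_eq0 => /eqP -> j0; exists [::]; by rewrite Out_nilS addn0.
move=> Hs j0; case: (boolP (a \in r)) => ar; last first.
  exists (phi r); rewrite Out_nota // notin_phi (count_memPn ar) addn0; by split.
have [v [r' [Er av]]] := splitA ar.
have [X [EX aX]] : exists X, Out r' (nseq j.+1 a) = X ++ nseq (j.+1 + count_mem a r') a /\ a \notin X.
  by apply: IH => //; move: Hs; rewrite Er size_cat /=; lia.
exists (phi v ++ X); rewrite Er Out_split // EX catA; split.
  by rewrite count_cat /= eqxx (count_memPn av) /= add0n add1n addnS.
by rewrite mem_cat notin_phi negb_or av.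
Qed.

Lemma contig_Out_a r a j : 0 < j -> contigb a (Out r (nseq j a)).
Proof.
move=> j0; have [X [-> aX]] := @Out_tail (size r) r a j (leqnn _) j0.
by rewrite contig_catl // contig_nseq.
Qed.

Lemma contig_nseql x j a r : x != a -> contigb x (nseq j a ++ r) = contigb x r.
Proof. by move=> xa; rewrite contig_catl // mem_nseq negb_and xa orbT. Qed.

Lemma contig_Out n : forall r a j x, size r <= n -> 0 < j ->
  contigb x (nseq j a ++ r) -> contigb x (Out r (nseq j a)).
Proof.
elim: n => [|n IH] r a j x.
  by rewrite leqn0 size_eq0 => /eqP -> j0; rewrite Out_nilS cats0.
move=> Hs j0; case: (eqVneq x a) => [->|xa] H; first exact: contig_Out_a.
have IHphi : forall w, size w <= n.+1 -> contigb x w -> contigb x (phi w).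
  case=> [|b w] Hw; first by rewrite phi_nil.
  by rewrite phi_consE => Hb; apply: IH.
rewrite contig_nseql // in H.
case: (boolP (a \in r)) => ar; last first.
  by rewrite Out_nota // contig_catr ?mem_nseq ?negb_and ?xa ?orbT // IHphi.
have [v [r' [Er av]]] := splitA ar; subst r.
rewrite Out_split //.
have Hs' : size r' <= n by move: Hs; rewrite size_cat /=; lia.
case: (boolP (x \in v)) => xv.
  have xr' : x \notin r' := contig_split H xa xv.
  rewrite contig_catr; last by rewrite notin_Out negb_or xr' /= negb_and xa.
  apply: IHphi; first by move: Hs; rewrite size_cat; lia.
  by move: H; rewrite contig_catr // inE negb_or xa.
rewrite contig_catl ?notin_phi //; apply: IH => //.
by move: H; rewrite contig_catl // -cat1s contig_catl ?inE // contig_nseql.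
Qed.

Lemma contig_phi x w : contigb x w -> contigb x (phi w).
Proof. case: w => [|b w]; first by rewrite phi_nil. by rewrite phi_consE => H; exact: (@contig_Out (size w) w b 1 x (leqnn _) isT H). Qed.

Lemma contig_a_split a j v r' : 0 < j -> a \notin v ->
  contigb a (nseq j a ++ v ++ a :: r') -> v = [::].
Proof.
case: v => [//|y v] j0 av H; exfalso.
have ay : a != y by apply: contraNneq av => ->; rewrite inE eqxx.
have := contig_split H ay; rewrite mem_nseq eqxx andbT => /(_ j0).
by rewrite mem_cat inE eqxx orbT.
Qed.

Lemma newsorted_Out n : forall r a j, size r <= n -> 0 < j ->
  (exists x, ~~ contigb x (nseq j a ++ r)) ->
  exists c, ~~ contigb c (nseq j a ++ r) /\ contigb c (Out r (nseq j a)).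
Proof.
elim: n => [|n IH] r a j.
  rewrite leqn0 size_eq0 => /eqP -> j0 [x]; by rewrite cats0 contig_nseq.
move=> Hs j0 [x Hx].
have IHphi : forall w, size w <= n.+1 -> (exists x, ~~ contigb x w) ->
    exists c, ~~ contigb c w /\ contigb c (phi w).
  case=> [|b w] Hw [y Hy]; first by rewrite contig_notin in Hy.
  by rewrite phi_consE; exact: (IH w b 1 Hw isT (ex_intro _ y Hy)).
case: (boolP (contigb a (nseq j a ++ r))) => Ha; last first.
  by exists a; split => //; apply: contig_Out_a.
case: (boolP (a \in r)) => ar.
  have [v [r' [Er av]]] := splitA ar; subst r.
  have v0 := contig_a_split j0 av Ha; subst v.
  rewrite Out_acons nseq_cat_cons; apply: IH => //.
  by exists x; move: Hx; rewrite cat0s nseq_cat_cons.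
have xa : x != a by apply: contraNneq Hx => ->.
rewrite contig_nseql // in Hx.
have [c [Hc1 Hc2]] := IHphi r Hs (ex_intro _ x Hx).
have cr : c \in r by apply: contraR Hc1 => /contig_notin.
have ca : c != a by apply: contraNneq ar => <-.
exists c; rewrite contig_nseql // Out_nota // contig_catr //.
by rewrite mem_nseq negb_and ca orbT.
Qed.

Lemma newsorted_phi w : (exists x, ~~ contigb x w) ->
  exists c, ~~ contigb c w /\ contigb c (phi w).
Proof.
case: w => [|b w] [y Hy]; first by rewrite contig_notin in Hy.
rewrite phi_consE; apply: (@newsorted_Out (size w) w b 1) => //; by exists y.
Qed.

Lemma filter_Out (P : pred A) n : forall r a j, size r <= n -> 0 < j ->
  (forall x, ~~ P x -> contigb x (nseq j a ++ r)) ->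
  filter P (Out r (nseq j a)) = Out (filter P r) (filter P (nseq j a)).
Proof.
elim: n => [|n IH] r a j.
  by rewrite leqn0 size_eq0 => /eqP -> j0 _; rewrite !Out_nilS.
move=> Hs j0 HP.
have IHphi : forall w, size w <= n.+1 -> (forall x, ~~ P x -> contigb x w) ->
    phi (filter P w) = filter P (phi w).
  case=> [|b w] Hw HPw; first by rewrite /= phi_nil.
  rewrite phi_consE IH //=; case: (P b) => //; by rewrite phi_consE.
case: (boolP (P a)) => Pa.
  rewrite filter_nseq Pa mul1n.
  case: (boolP (a \in r)) => ar.
    have [v [r' [Er av]]] := splitA ar; subst r.
    have Hv : forall x, ~~ P x -> contigb x v.
      move=> x Px; have xa : x != a by apply: contraNneq Px => ->.
      have := HP x Px; rewrite contig_nseql // => H.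
      case: (boolP (x \in v)) => xv; last exact: contig_notin.
      have xr' : x \notin r' := contig_split H xa xv.
      by move: H; rewrite contig_catr // inE negb_or xa.
    have Hr' : forall x, ~~ P x -> contigb x (nseq j.+1 a ++ r').
      move=> x Px; have xa : x != a by apply: contraNneq Px => ->.
      have := HP x Px; rewrite !contig_nseql // => H.
      case: (boolP (x \in v)) => xv.
        by apply: contig_notin; apply: contig_split H xa xv.
      by move: H; rewrite contig_catl // -cat1s contig_catl // inE.
    rewrite Out_split // filter_cat -IHphi //; last by move: Hs; rewrite size_cat; lia.
    rewrite IH //; last by move: Hs; rewrite size_cat /=; lia.
    rewrite filter_cat /= Pa Out_split ?mem_filter ?negb_and ?av ?orbT //.
    by rewrite filter_nseq Pa mul1n.
  have Hr : forall x, ~~ P x -> contigb x r.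
    move=> x Px; have xa : x != a by apply: contraNneq Px => ->.
    by rewrite -(contig_nseql j r xa) HP.
  rewrite Out_nota // filter_cat filter_nseq Pa mul1n -(IHphi r Hs Hr) Out_nota //.
  by rewrite mem_filter negb_and ar orbT.
rewrite [filter P (nseq j a)]filter_nseq (negbTE Pa) mul0n /=.
have Ha := HP a Pa.
case: (boolP (a \in r)) => ar.
  have [v [r' [Er av]]] := splitA ar; subst r.
  have v0 := contig_a_split j0 av Ha; subst v.
  have Hr' : forall x, ~~ P x -> contigb x (nseq j.+1 a ++ r').
    by move=> x Px; rewrite -nseq_cat_cons HP.
  by rewrite Out_acons (IH r' a j.+1 Hs isT Hr') /= (negbTE Pa) filter_nseq (negbTE Pa).
have Hr : forall x, ~~ P x -> contigb x r.
  move=> x Px; case: (eqVneq x a) => [->|xa]; first exact: contig_notin.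
  by rewrite -(contig_nseql j r xa) HP.
by rewrite Out_nota // filter_cat filter_nseq (negbTE Pa) mul0n cats0 -(IHphi r Hs Hr).
Qed.

Lemma phi_filter (P : pred A) w : (forall x, ~~ P x -> contigb x w) ->
  phi (filter P w) = filter P (phi w).
Proof.
case: w => [|b w] HP; first by rewrite /= phi_nil.
rewrite phi_consE (@filter_Out P (size w) w b 1) //=.
by case: (P b); rewrite // phi_consE.
Qed.

Lemma phi_uniq v : uniq v -> phi v = rev v.
Proof.
elim: v => [|b v IH] /=; first by rewrite phi_nil.
by move=> /andP [bv uv]; rewrite phi_consE Out_nota // IH // rev_cons -cats1.
Qed.

Lemma phi_two a w1 w2 : a \notin w1 -> a \notin w2 ->
  phi (a :: w1 ++ a :: w2) = phi w1 ++ phi w2 ++ [:: a; a].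
Proof.
by move=> a1 a2; rewrite phi_consE Out_split // Out_nota.
Qed.

End Props.


Section Main.
Variable A : eqType.
Implicit Types (x y a b c : A) (u v w r s t : seq A).

Definition R w := [seq x <- w | ~~ contigb x w].
Definition U w := undup (R w).
Definition W2 w := forall x, count_mem x w <= 2.

Lemma mem_R x w : (x \in R w) = (x \in w) && ~~ contigb x w.
Proof. by rewrite mem_filter andbC. Qed.

Lemma mem_U x w : (x \in U w) = (x \in w) && ~~ contigb x w.
Proof. by rewrite mem_undup mem_R. Qed.

Lemma contig_count1 x w : count_mem x w <= 1 -> contigb x w.
Proof.
case: (boolP (x \in w)) => xw; last by move=> _; apply: contig_notin.
have [v [r' [-> xv]]] := splitA xw.
rewrite count_cat (count_memPn xv) /= eqxx add0n add1n ltnS leqn0 => /eqP/count_memPn xr.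
by apply/contigP; exists v, 1, r'.
Qed.

Lemma noncontig_count2 x w : ~~ contigb x w -> 1 < count_mem x w.
Proof. by apply: contraR; rewrite -leqNgt; apply: contig_count1. Qed.

Lemma U_phi_sub w : {subset U (phi w) <= U w}.
Proof.
move=> x; rewrite !mem_U notin_phi => /andP [-> H] /=.
by apply: contra H; apply: contig_phi.
Qed.

Lemma Out_nseq_prefix a k j r' : Out (nseq k a ++ r') (nseq j a) = Out r' (nseq (k + j) a).
Proof.
elim: k j => [//|k IH] j; rewrite cat_cons Out_acons IH; congr (Out _ (nseq _ _)); lia.
Qed.

Lemma nseq_prefix_phi a k r' : 0 < k -> a \notin r' ->
  phi (nseq k a ++ r') = phi r' ++ nseq k a.
Proof.
case: k => [//|k] _ ar; rewrite cat_cons phi_consE Out_nseq_prefix Out_nota ?addn1 //.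
Qed.

Lemma ar1 (x y : nat) : 1 < y -> x + y <= 2 -> x = 0. Proof. lia. Qed.
Lemma ar2 (x y : nat) : 1 < x -> x + y <= 2 -> y = 0. Proof. lia. Qed.

Lemma ar3 (x y : nat) : 0 < y -> x + y <= 2 -> x <= 1. Proof. lia. Qed.
Lemma ar4 (x y : nat) : 0 < x -> x + y <= 2 -> y <= 1. Proof. lia. Qed.

Lemma ar5 (x y z : nat) : x = y -> x + y = z + z -> x = z. Proof. lia. Qed.

Lemma count_filter_le (Q : pred A) x v : count_mem x (filter Q v) <= count_mem x v.
Proof. by rewrite count_filter; apply: sub_count => y /andP []. Qed.

Lemma liftL n : forall w s, size w <= n -> W2 w ->
  size (U w) <= (size (U (phi w))).+1 -> R (phi w) = s ++ s ->
  exists t, uniq t /\ R w = t ++ t.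
Proof.
elim: n => [|n IH] w s.
  by rewrite leqn0 size_eq0 => /eqP -> *; exists [::].
case: w => [|a r] Hs HW HU HR; first by exists [::].
case: (boolP (contigb a (a :: r))) => Ha.
  have [k [r' [k0 [Ew ar']]]] :
      exists k r', 0 < k /\ a :: r = nseq k a ++ r' /\ a \notin r'.
    case: (boolP (a \in r)) => ar; last by exists 1, r.
    have [v [r'' [Er av]]] := splitA ar; subst r.
    have v0 : v = [::] := @contig_a_split A a 1 v r'' isT av Ha.
    subst v; exists 2, r''; split => //; split => //.
    apply/count_memPn; have := HW a; rewrite /= eqxx; lia.
  rewrite Ew in Hs HW HU HR *.
  have ER : R (nseq k a ++ r') = R r'.
    rewrite /R filter_cat filter_nseq contig_catr // contig_nseq /=.
    apply: eq_in_filter => x xr; have xa : x != a by apply: contraNneq ar' => <-.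
    by rewrite contig_nseql.
  have ERp : R (phi (nseq k a ++ r')) = R (phi r').
    rewrite nseq_prefix_phi // /R filter_cat filter_nseq contig_catl ?notin_phi //.
    rewrite contig_nseq /= cats0; apply: eq_in_filter => x.
    rewrite notin_phi => xr; have xa : x != a by apply: contraNneq ar' => <-.
    by rewrite contig_catr // mem_nseq negb_and xa orbT.
  have Hs' : size r' <= n by move: Hs; rewrite size_cat size_nseq; lia.
  have HW' : W2 r' by move=> x; apply: leq_trans (HW x); rewrite count_cat leq_addl.
  have HU' : size (U r') <= (size (U (phi r'))).+1 by move: HU; rewrite /U ER ERp.
  have HR' : R (phi r') = s ++ s by rewrite -ERp.
  have [t [ut Et]] := IH r' s Hs' HW' HU' HR'.
  by exists t; rewrite ER.
have c2 : count_mem a (a :: r) = 2.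
  by have := HW a; have := noncontig_count2 Ha; lia.
have ar : a \in r by rewrite -has_pred1 has_count; move: c2 => /=; rewrite eqxx; lia.
have [w1 [w2 [Er a1]]] := splitA ar; subst r.
have a2 : a \notin w2.
  by apply/count_memPn; move: c2; rewrite /= count_cat /= eqxx (count_memPn a1); lia.
have Ephi := phi_two a1 a2.
set W := a :: w1 ++ a :: w2 in Hs HW HU HR Ha c2 Ephi *.
have H1 : forall x, x != a -> x \notin w2 -> contigb x W = contigb x w1.
  by move=> x xa x2; rewrite /W -cat1s contig_catl ?inE // contig_catr // inE negb_or xa x2.
have H2 : forall x, x != a -> x \notin w1 -> contigb x W = contigb x w2.
  move=> x xa x1; rewrite /W (_ : a :: w1 ++ a :: w2 = (a :: w1 ++ [:: a]) ++ w2).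
    by rewrite contig_catl // inE negb_or xa mem_cat negb_or x1 inE xa.
  by rewrite cat_cons -catA.
have H1p : forall x, x != a -> x \notin w2 -> contigb x (phi W) = contigb x (phi w1).
  move=> x xa x2; rewrite Ephi contig_catr // mem_cat notin_phi negb_or x2 !inE.
  by rewrite (negbTE xa).
have H2p : forall x, x != a -> x \notin w1 -> contigb x (phi W) = contigb x (phi w2).
  move=> x xa x1; rewrite Ephi contig_catl ?notin_phi // contig_catr //.
  by rewrite !inE (negbTE xa).
have caphi : contigb a (phi W).
  rewrite Ephi catA contig_catl; first exact: (contig_nseq a 2 a).
  by rewrite mem_cat !notin_phi negb_or a1 a2.
have aUw : a \in U W by rewrite mem_U Ha /W inE eqxx.
have Claim1 : forall x, x \in U W -> x != a -> x \in U (phi W).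
  have sub : {subset U (phi W) <= rem a (U W)}.
    move=> x xU; rewrite (mem_rem_uniq _ (undup_uniq _)) inE (U_phi_sub xU) andbT.
    by apply: contraTneq xU => ->; rewrite mem_U caphi andbF.
  have Hsz : size (rem a (U W)) <= size (U (phi W)) by rewrite size_rem //; lia.
  have [_ Eq] := uniq_min_size (undup_uniq _) sub Hsz.
  by move=> x xU xa; rewrite Eq (mem_rem_uniq _ (undup_uniq _)) inE xa xU.
have inW : forall x, ~~ contigb x W -> x \in W.
  by move=> x; apply: contraR; apply: contig_notin.
have Claim2 : forall x, x != a -> ~~ contigb x W -> (x \in w1) && (x \in w2).
  move=> x xa Hx; have := inW x Hx; rewrite /W inE (negbTE xa) /= mem_cat inE (negbTE xa) /=.
  case: (boolP (x \in w2)) => x2; case: (boolP (x \in w1)) => x1 //= _.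
  - (* x only in w2 *)
    rewrite H2 // in Hx.
    have [c [Hc1 Hc2]] := newsorted_phi (ex_intro _ x Hx).
    have c2' := noncontig_count2 Hc1.
    have cw2 : c \in w2 by apply: contraR Hc1 => /contig_notin.
    have ca : c != a by apply: contraTneq cw2 => ->.
    have c1 : c \notin w1.
      apply/count_memPn; have := HW c; rewrite /W /= count_cat /= [a == c]eq_sym (negbTE ca) /= !add0n.
      exact: ar1.
    have HcW : ~~ contigb c W by rewrite H2.
    have : c \in U W by rewrite mem_U inW.
    move=> /Claim1 /(_ ca); rewrite mem_U H2p // Hc2 andbF //.
  - (* x only in w1 *)
    rewrite H1 // in Hx.
    have [c [Hc1 Hc2]] := newsorted_phi (ex_intro _ x Hx).
    have c2' := noncontig_count2 Hc1.
    have cw1 : c \in w1 by apply: contraR Hc1 => /contig_notin.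
    have ca : c != a by apply: contraTneq cw1 => ->.
    have c2n : c \notin w2.
      apply/count_memPn; have := HW c; rewrite /W /= count_cat /= [a == c]eq_sym (negbTE ca) /= !add0n.
      exact: ar2.
    have HcW : ~~ contigb c W by rewrite H1.
    have : c \in U W by rewrite mem_U inW.
    move=> /Claim1 /(_ ca); rewrite mem_U H1p // Hc2 andbF //.
set Q := fun x => ~~ contigb x W.
have QW : forall x, Q x = ~~ contigb x W by [].
have ERw : R W = a :: filter Q w1 ++ a :: filter Q w2.
  have QaT : Q a = true := Ha.
  by rewrite (_ : R W = filter Q W) // {1}/W /= QaT filter_cat /= QaT.
have Qphi : forall x, x != a -> ~~ contigb x (phi W) = Q x.
  move=> x xa; apply/idP/idP.
    by apply: contra; apply: contig_phi.
  move=> Hx; have : x \in U W by rewrite mem_U inW.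
  by move=> /Claim1 /(_ xa); rewrite mem_U => /andP [].
have ca' : contigb a (phi w1 ++ phi w2 ++ [:: a; a]) by rewrite -Ephi.
have ERphi : R (phi W) = filter Q (phi w1) ++ filter Q (phi w2).
  have E1 : forall v, a \notin v ->
      [seq x <- phi v | ~~ contigb x (phi W)] = filter Q (phi v).
    move=> v av; apply: eq_in_filter => x; rewrite notin_phi => xv.
    by apply: Qphi; apply: contraNneq av => <-.
  rewrite /R -(E1 w1 a1) -(E1 w2 a2) {2}Ephi !filter_cat /= Ephi ca' /=.
  by rewrite cats0.
have Hw1 : forall x, ~~ Q x -> contigb x w1.
  move=> x; rewrite negbK => Hx; case: (boolP (x \in w1)) => x1; last exact: contig_notin.
  have xa : x != a by apply: contraNneq a1 => <-.
  have x2 : x \notin w2.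
    by apply: (@contig_split A x a (a :: w1) w2) => //; rewrite inE x1 orbT.
  by rewrite -H1.
have Hw2 : forall x, ~~ Q x -> contigb x w2.
  move=> x; rewrite negbK => Hx; case: (boolP (x \in w2)) => x2; last exact: contig_notin.
  have xa : x != a by apply: contraNneq a2 => <-.
  have x1 : x \notin w1.
    apply: contraL x2 => x1.
    by apply: (@contig_split A x a (a :: w1) w2) => //; rewrite inE x1 orbT.
  by rewrite -H2.
have cnt : forall x, x != a -> count_mem x w1 + count_mem x w2 <= 2.
  by move=> x xa; have := HW x; rewrite /W /= count_cat /= [a == x]eq_sym (negbTE xa) /= !add0n.
have U1 : uniq (filter Q w1).
  apply: count_mem_uniq => x; case: (boolP (x \in filter Q w1)) => xf; last exact/count_memPn.
  have := xf; rewrite mem_filter => /andP [Qx x1].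
  have xa : x != a by apply: contraNneq a1 => <-.
  have /andP [_ x2] := Claim2 x xa Qx.
  apply/eqP; rewrite eqn_leq; apply/andP; split.
    apply: leq_trans (count_filter_le Q x w1) _; apply: ar3 (cnt x xa).
    by rewrite -has_count has_pred1.
  by rewrite -has_count has_pred1 xf.
have U2 : uniq (filter Q w2).
  apply: count_mem_uniq => x; case: (boolP (x \in filter Q w2)) => xf; last exact/count_memPn.
  have := xf; rewrite mem_filter => /andP [Qx x2].
  have xa : x != a by apply: contraNneq a2 => <-.
  have /andP [x1 _] := Claim2 x xa Qx.
  apply/eqP; rewrite eqn_leq; apply/andP; split.
    apply: leq_trans (count_filter_le Q x w2) _; apply: ar4 (cnt x xa).
    by rewrite -has_count has_pred1.
  by rewrite -has_count has_pred1 xf.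
have Emem : filter Q w1 =i filter Q w2.
  move=> x; rewrite !mem_filter; case: (boolP (Q x)) => //= Qx.
  apply/idP/idP => xw.
    have xa : x != a by apply: contraNneq a1 => <-.
    by have /andP [] := Claim2 x xa Qx.
  have xa : x != a by apply: contraNneq a2 => <-.
  by have /andP [] := Claim2 x xa Qx.
have Esz : size (rev (filter Q w1)) = size (rev (filter Q w2)).
  by rewrite !size_rev; apply: perm_size; apply: uniq_perm.
move: HR; rewrite ERphi -(phi_filter Hw1) -(phi_filter Hw2) !phi_uniq // => HR.
have Es : size (rev (filter Q w1)) = size s.
  by have := congr1 size HR; rewrite !size_cat; apply: ar5.
have /eqP := HR; rewrite eqseq_cat // => /andP [/eqP E1 /eqP E2].
have EF : filter Q w1 = filter Q w2 by rewrite -(revK (filter Q w1)) E1 -E2 revK.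
exists (a :: filter Q w1); split.
  by rewrite /= U1 mem_filter negb_and a1 orbT.
by rewrite ERw EF.
Qed.

Lemma sorted_of_contig w : (forall x, contigb x w) -> sorted_sp w.
Proof.
move=> H x i j k ij jk kw ei ek.
have /contigP [u [m [v [E [xu xv]]]]] := H x.
have Hsz : size w = size u + m + size v by rewrite E !size_cat size_nseq addnA.
have ui : size u <= i.
  rewrite leqNgt; apply/negP => iu; move: ei; rewrite E nth_cat iu => ei.
  by move: xu; rewrite -{1}ei mem_nth.
have km : k < size u + m.
  rewrite ltnNge; apply/negP => mk; move: ek; rewrite E nth_cat ltnNge.
  rewrite (leq_trans (leq_addr m _) mk) /= nth_cat size_nseq ltnNge.
  rewrite (_ : m <= k - size u) /=; last by move: mk; clear; lia.
  move=> ek; move: xv; rewrite -{1}ek mem_nth //; move: kw mk; rewrite Hsz; clear; lia.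
rewrite E nth_cat ltnNge (leq_trans ui (ltnW ij)) /= nth_cat size_nseq.
rewrite (_ : j - size u < m) ?nth_nseq ?ifT //; move: ij jk km ui; clear; lia.
Qed.

Lemma Upos_of_unsorted w : ~ sorted_sp w -> 0 < size (U w).
Proof.
move=> Hw; rewrite lt0n; apply/negP => /eqP /size0nil HU; apply: Hw.
apply: sorted_of_contig => x; apply/negPn/negP => Hx.
have : x \in U w by rewrite mem_U Hx andbT; apply: contraR Hx => /contig_notin.
by rewrite HU.
Qed.

Lemma U_mono w : size (U (phi w)) <= size (U w).
Proof. exact: uniq_leq_size (undup_uniq _) (@U_phi_sub w). Qed.

Lemma U_strict w : 0 < size (U w) -> size (U (phi w)) < size (U w).
Proof.
case E: (U w) => [//|y l] _; rewrite -E.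
have : y \in U w by rewrite E inE eqxx.
rewrite mem_U => /andP [_ Hy].
have [c [Hc1 Hc2]] := newsorted_phi (ex_intro _ y Hy).
have cU : c \in U w by rewrite mem_U Hc1 andbT; apply: contraR Hc1 => /contig_notin.
have sub : {subset U (phi w) <= rem c (U w)}.
  move=> x xU; rewrite (mem_rem_uniq _ (undup_uniq _)) inE (U_phi_sub xU) andbT.
  by apply: contraTneq xU => ->; rewrite mem_U Hc2 andbF.
have := uniq_leq_size (undup_uniq _) sub; rewrite size_rem // => H.
have Hpos : 0 < size (U w) by move: cU; case: (U w).
by apply: leq_ltn_trans H _; rewrite ltn_predL.
Qed.

Lemma perm_iter k w : perm_eq (iter k (@phi A) w) w.
Proof. elim: k => [|k IH] //=; exact: perm_trans (perm_phi _) IH. Qed.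

Lemma W2_perm w w' : perm_eq w w' -> W2 w' -> W2 w.
Proof. by move=> /permP Hp HW x; rewrite Hp. Qed.

Lemma sumn_ge2 (l : seq nat) : (forall m : nat, m \in l -> 1 < m) -> 2 * size l <= sumn l.
Proof.
elim: l => [//|z l IH] H /=; rewrite mulnS.
have Hl : forall m : nat, m \in l -> 1 < m by move=> m ml; apply: H; rewrite inE ml orbT.
have := H z (mem_head _ _); have := IH Hl; clear; lia.
Qed.

Lemma sumn_le2 (l : seq nat) : (forall m : nat, m \in l -> 1 < m) -> sumn l <= 2 * size l ->
  forall m : nat, m \in l -> m <= 2.
Proof.
elim: l => [//|z l IH] H Hs m /=.
have Hl : forall m : nat, m \in l -> 1 < m by move=> k kl; apply: H; rewrite inE kl orbT.
have := H z (mem_head _ _); have := sumn_ge2 Hl; move: Hs => /=; rewrite mulnS => Hs H1 H2.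
rewrite inE => /orP [/eqP ->|ml]; first by move: Hs H1 H2; clear; lia.
apply: IH ml => //; move: Hs H1 H2; clear; lia.
Qed.

End Main.


Lemma arA (n k : nat) (f : nat -> nat) :
  (forall k, f k.+1 <= f k) -> (forall k, 0 < f k -> f k.+1 < f k) -> f 0 <= n ->
  f k <= n - k.
Proof.
move=> Hm Hs H0; elim: k => [|k IH]; first by rewrite subn0.
case: (posnP (f k)) => Hk.
  by have := Hm k; rewrite Hk leqn0 => /eqP ->.
have := Hs k Hk; move: IH; clear; lia.
Qed.

Lemma arB (n : nat) (f : nat -> nat) :
  (forall k, f k.+1 <= f k) -> (forall k, 0 < f k -> f k.+1 < f k) -> 0 < f n.-1 ->
  forall k, k < n -> n - k <= f k.
Proof.
move=> Hm Hs Hl; suff : forall m k, k < n -> n - k = m.+1 -> m.+1 <= f k.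
  move=> H k kn; have E : n - k = ((n - k).-1).+1 by move: kn; clear; lia.
  by rewrite {1}E; apply: H.
elim=> [|m IH] k kn E.
  by rewrite (_ : k = n.-1) //; move: kn E; clear; lia.
have H1 : k.+1 < n by move: kn E; clear; lia.
have := IH k.+1 H1 (ltac:(move: E; clear; lia)) => H2.
have := Hs k (leq_trans (leq_trans (ltn0Sn m) H2) (Hm k)); move: H2; clear; lia.
Qed.

Theorem theorem1 (A : eqType) (p : seq A) :
  3 <= Nletters p ->
  size p <= 2 * Nletters p ->
  ~ sorted_sp (iter (Nletters p).-1 (@phi_aba A) p) ->
  exists s : seq A,
    uniq s /\ size s = Nletters p /\ sp_equiv p (s ++ s).
Proof.
move=> H3 Hsz Hns.
have Hns' : ~ sorted_sp (iter (Nletters p).-1 (@phi A) p).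
  by rewrite -(eq_iter (@phi_abaE A)).
move: H3 Hsz Hns'; rewrite /Nletters; set n := size (undup p) => H3 Hsz Hns0.
set f := fun k => size (U (iter k (@phi A) p)).
have Hm : forall k, f k.+1 <= f k by move=> k; rewrite /f iterS; apply: U_mono.
have Hst : forall k, 0 < f k -> f k.+1 < f k by move=> k; rewrite /f iterS; apply: U_strict.
have H0 : f 0 <= n.
  rewrite /f /=; apply: uniq_leq_size (undup_uniq _) _ => x.
  by rewrite mem_U mem_undup => /andP [].
have Hl : 0 < f n.-1 by apply: Upos_of_unsorted.
have fup : forall k, f k <= n - k := fun k => @arA n k f Hm Hst H0.
have flow := @arB n f Hm Hst Hl.
have n0 : 0 < n by move: H3; clear; lia.
have f0 : f 0 = n by apply/eqP; rewrite eqn_leq H0 /=; have := flow 0 n0; rewrite subn0.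
have allU : forall x, x \in p -> ~~ contigb x p.
  have sub : {subset U p <= undup p} by move=> x; rewrite mem_U mem_undup => /andP [].
  have Hsz' : size (undup p) <= size (U p) by have := f0; rewrite /f /= => ->.
  have [_ Eq] := uniq_min_size (undup_uniq _) sub Hsz'.
  by move=> x xp; have := Eq x; rewrite mem_U mem_undup xp /= => ->.
have W2p : W2 p.
  move=> x; case: (boolP (x \in p)) => xp; last by rewrite (count_memPn xp).
  set l := [seq count_mem y p | y <- undup p].
  have Hl2 : forall m : nat, m \in l -> 1 < m.
    move=> m /mapP [y yp ->]; apply: noncontig_count2; apply: allU; by rewrite -mem_undup.
  have Hsum : sumn l <= 2 * size l.
    rewrite size_map -/n; apply: leq_trans Hsz; rewrite -(perm_size (perm_count_undup p)).
    by rewrite size_flatten /shape -map_comp /l; under [in X in _ <= X]eq_map => y do rewrite /= size_nseq.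
  by apply: (sumn_le2 Hl2 Hsum); apply: map_f; rewrite mem_undup.
have back : forall m, m <= n -> exists t, uniq t /\ R (iter (n - m) (@phi A) p) = t ++ t.
  elim=> [|m IH] mn.
    exists [::]; split => //; rewrite subn0.
    have HU : U (iter n (@phi A) p) = [::].
      by apply: size0nil; apply/eqP; rewrite -leqn0; have := fup n; rewrite subnn.
    case E : (R _) => [//|y l]; have : y \in U (iter n (@phi A) p) by rewrite /U mem_undup E inE eqxx.
    by rewrite HU.
  have [t [ut Et]] := IH (ltnW mn).
  set k := n - m.+1.
  have Ek : n - m = k.+1 by rewrite /k; move: mn; clear; lia.
  rewrite Ek iterS in Et.
  have HW : W2 (iter k (@phi A) p) := W2_perm (perm_iter k p) W2p.
  have HU : size (U (iter k (@phi A) p)) <= (size (U (phi (iter k (@phi A) p)))).+1.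
    have Hk1 : n - k.+1 <= f k.+1.
      case: (ltnP k.+1 n) => Hkn; first exact: flow.
      by rewrite (_ : n - k.+1 = 0) //; move: Hkn; clear; lia.
    have := fup k; move: Hk1; rewrite /f iterS; move: mn; rewrite /k; clear; lia.
  have [t' [ut' Et']] := @liftL A (size (iter k (@phi A) p)) (iter k (@phi A) p) t (leqnn _) HW HU Et.
  by exists t'.
have [t [ut Et]] := back n (leqnn n).
rewrite subnn /= in Et.
have Ep : R p = p by apply/all_filterP; apply/allP => x xp; exact: allU x xp.
rewrite Ep in Et.
exists t; split => //; split.
  rewrite /n Et undup_cat undup_id // (_ : [seq x <- t | x \notin t] = [::]) //.
  by rewrite (eq_in_filter (a2 := pred0)) ?filter_pred0 // => x ->.
by exists id; split; [exists id | rewrite map_id].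
Qed.
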